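(* Let $G$ be a connected graph of order $n$ with diameter $\mathrm{diam}(G)$, and let $g$ be an integer with $0\leq g\leq \lfloor \frac{\mathrm{diam}(G)}{2}\rfloor-1$. Then $G$ has an $R_g$-cutset and $$\kappa_g(G)\leq n-\mathrm{diam}(G).$$ Moreover, the bound is sharp: equality holds for the path $P_n$.
   Context: All graphs are finite and simple. $\mathrm{diam}(G)$ is the maximum distance between two vertices of $G$. A set $S\subseteq V(G)$ is a cutset if $G-S$ is disconnected. For a non-negative integer $g$, a cutset $S$ is an $R_g$-cutset if every connected component of $G-S$ has at least $g+1$ vertices. If $G$ has at least one $R_g$-cutset, the $g$-extra connectivity $\kappa_g(G)$ is the minimum cardinality of an $R_g$-cutset of $G$. *)

(* Defs.v *)
From mathcomp Require Import all_boot.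
Set Implicit Arguments. Unset Strict Implicit. Unset Printing Implicit Defensive.

Definition simple_graph (T : finType) (e : rel T) : Prop :=
  symmetric e /\ irreflexive e.

Definition connected_graph (T : finType) (e : rel T) : Prop :=
  forall x y : T, connect e x y.

Fixpoint ball (T : finType) (e : rel T) (k : nat) (x : T) : {set T} :=
  match k with
  | 0 => [set x]
  | k'.+1 => ball e k' x :|: [set y | [exists z in ball e k' x, e z y]]
  end.

(* dist e x y = least k such that y is within k steps of x (for connected
   graphs, the distance is < #|T|, so the search range suffices). *)
Definition dist (T : finType) (e : rel T) (x y : T) : nat :=
  find (fun k => y \in ball e k x) (iota 0 #|T|).

Definition diam (T : finType) (e : rel T) : nat :=
  \max_(x : T) \max_(y : T) dist e x y.

Definition del_rel (T : finType) (e : rel T) (S : {set T}) : rel T :=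
  [rel x y | [&& e x y, x \notin S & y \notin S]].

Definition comp (T : finType) (e : rel T) (S : {set T}) (v : T) : {set T} :=
  [set w | (w \notin S) && connect (del_rel e S) v w].

Definition is_cutset (T : finType) (e : rel T) (S : {set T}) : bool :=
  [exists u, exists v,
     [&& u \notin S, v \notin S & ~~ connect (del_rel e S) u v]].

Definition is_Rg_cutset (T : finType) (e : rel T) (g : nat) (S : {set T}) : bool :=
  is_cutset e S && [forall v, (v \notin S) ==> (g.+1 <= #|comp e S v|)].

Definition has_Rg_cutset (T : finType) (e : rel T) (g : nat) : Prop :=
  exists S : {set T}, is_Rg_cutset e g S.

(* g-extra connectivity: minimum size of an R_g-cutset (meaningful when
   one exists; the default #|T| is never attained below a genuine cutset). *)
Definition kappa (T : finType) (e : rel T) (g : nat) : nat :=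
  \big[minn/#|T|]_(S : {set T} | is_Rg_cutset e g S) #|S|.

Definition path_rel (n : nat) : rel 'I_n :=
  fun i j : 'I_n => (i.+1 == j :> nat) || (j.+1 == i :> nat).
Arguments path_rel n : clear implicits.

(* Main.v *)
Require Import Defs.
From mathcomp Require Import all_boot.
From mathcomp Require Import zify.
Set Implicit Arguments. Unset Strict Implicit. Unset Printing Implicit Defensive.

Section Gen.
Variables (T : finType) (e : rel T).

Lemma ball_sub k x : ball e k x \subset ball e k.+1 x.
Proof. exact: subsetUl. Qed.

Lemma ball_mono j k x : j <= k -> ball e j x \subset ball e k x.
Proof.
elim: k => [|k IH]; first by rewrite leqn0 => /eqP ->.
rewrite leq_eqVlt => /orP[/eqP -> //| ]; rewrite ltnS => /IH H.
exact: subset_trans H (ball_sub k x).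
Qed.

Lemma ball_step k x z y : z \in ball e k x -> e z y -> y \in ball e k.+1 x.
Proof.
move=> Hz Hzy; rewrite /= inE; apply/orP; right; rewrite inE.
by apply/existsP; exists z; rewrite Hz.
Qed.

Lemma ball_stepP k x y : y \in ball e k.+1 x ->
  y \in ball e k x \/ exists2 z, z \in ball e k x & e z y.
Proof.
rewrite /= inE => /orP[->|]; first by left.
by rewrite inE => /existsP[z /andP[H1 H2]]; right; exists z.
Qed.

Lemma ball0 x y : (y \in ball e 0 x) = (y == x).
Proof. by rewrite /= inE. Qed.

Lemma conn_inv (r r' : rel T) (P : pred T) a b :
  (forall x y, P x -> r x y -> P y /\ r' x y) -> P a -> connect r a b ->
  P b /\ connect r' a b.
Proof.
move=> H Pa /connectP[p]; elim/last_ind: p b => [|p z IH] b /=.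
  by move=> _ ->; split.
rewrite rcons_path last_rcons => /andP[Hp Hz] ->.
have [P1 C1] := IH _ Hp erefl.
have [P2 r2] := H _ _ P1 Hz.
by split => //; apply: connect_trans C1 (connect1 r2).
Qed.

Lemma del_sym S : symmetric e -> symmetric (del_rel e S).
Proof.
move=> se x y; rewrite /del_rel /= se.
by case: (e y x); case: (x \in S); case: (y \in S).
Qed.

Lemma ball_conn k u (X : {set T}) x : (forall y, y \in ball e k u -> y \notin X) ->
  x \in ball e k u -> connect (del_rel e X) u x.
Proof.
elim: k x => [|k IH] x HX.
  by rewrite ball0 => /eqP ->.
have HX' : forall y, y \in ball e k u -> y \notin X.
  by move=> y Hy; apply: HX; apply: (subsetP (ball_sub k u)).
move=> Hx; case: (ball_stepP Hx) => [Hk|[z Hz Hzx]]; first exact: IH.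
apply: connect_trans (IH _ HX' Hz) (connect1 _).
by rewrite /del_rel /= Hzx HX' //= HX.
Qed.

Lemma path_ball u p : path e u p -> last u p \in ball e (size p) u.
Proof.
elim/last_ind: p => [|p z IH] /=; first by rewrite ball0.
rewrite rcons_path last_rcons size_rcons => /andP[Hp Hz].
exact: ball_step (IH Hp) Hz.
Qed.

Lemma dist_spec u v : connect e u v ->
  v \in ball e (dist e u v) u /\ forall k, k < dist e u v -> v \notin ball e k u.
Proof.
move=> /connectP[p Hp ->].
case: (shortenP Hp) => p' Hp' Hu _.
have Hs : size p' < #|T|.
  have := max_card (mem (u :: p')).
  by move/card_uniqP: Hu => -> /=.
have Hb := path_ball Hp'.
set a := fun k => last u p' \in ball e k u.
have Hh : has a (iota 0 #|T|).
  by apply/hasP; exists (size p'); rewrite ?mem_iota //=.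
rewrite has_find size_iota in Hh.
split.
  have := nth_find 0 (a := a) (s := iota 0 #|T|).
  rewrite has_find size_iota => /(_ Hh).
  by rewrite nth_iota.
move=> k Hk; have := before_find 0 Hk.
by rewrite nth_iota ?(ltn_trans Hk) // => ->.
Qed.

Lemma geo_path u d v : v \in ball e d u ->
  (forall k, k < d -> v \notin ball e k u) ->
  exists p : nat -> T, [/\ p d = v, p 0 = u,
     (forall i, i <= d -> p i \in ball e i u),
     (forall k i, k < i -> i <= d -> p i \notin ball e k u) &
     (forall i, i < d -> e (p i) (p i.+1))].
Proof.
elim: d v => [|d IH] v Hv Hn.
  exists (fun _ => v); split => //.
  - by move: Hv; rewrite ball0 => /eqP.
  - by move=> i; rewrite leqn0 => /eqP ->.
  - by move=> k i Hk Hi; have := leq_trans Hk Hi.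
case: (ball_stepP Hv) => [Hd|[z Hz Hzv]].
  by have := Hn d (ltnSn d); rewrite Hd.
have Hzn : forall k, k < d -> z \notin ball e k u.
  move=> k Hk; apply/negP => Hzk.
  by have := Hn k.+1 Hk; rewrite (ball_step Hzk Hzv).
have [p [p1 p2 p3 p4 p5]] := IH z Hz Hzn.
exists (fun i => if i == d.+1 then v else p i); split => //=.
- by rewrite eqxx.
- move=> i; case: eqP => [-> //|ne] Hi; apply: p3; lia.
- move=> k i Hk Hi; case: eqP => [Ei|ne]; first by apply: Hn; lia.
  by apply: p4 => //; lia.
- move=> i Hi; case: eqP => [Ei|ne]; first by exfalso; lia.
  case: eqP => [Ei|ne2].
    have -> : i = d by lia.
    by rewrite p1.
  by apply: p5; lia.
Qed.

Lemma interval_conn (p : nat -> T) (X : {set T}) a b :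
  (forall i, a <= i < b -> e (p i) (p i.+1)) ->
  (forall i, a <= i <= b -> p i \notin X) ->
  forall i, a <= i <= b -> connect (del_rel e X) (p a) (p i).
Proof.
move=> He Hx i /andP[hai hib]; elim: i hai hib => [|i IH] hai hib.
  by rewrite leqn0 in hai; rewrite (eqP hai).
case: (leqP a i) => h.
  apply: connect_trans (IH h (ltnW hib)) (connect1 _).
  rewrite /del_rel /= He ?Hx //; apply/andP; split => //; lia.
have -> : a = i.+1 by apply/eqP; rewrite eqn_leq hai.
by [].
Qed.

Lemma main1 g : simple_graph e -> connected_graph e -> g.+1 <= (diam e)./2 ->
  exists S, is_Rg_cutset e g S /\ #|S| <= #|T| - diam e.
Proof.
move=> [se ie] ce hg.
have d2 : g.+1 + g.+1 <= diam e.
  rewrite addnn; apply: leq_trans (leq_subr (odd (diam e)) _).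
  by rewrite -halfK leq_double.
have [u [v Huv]] : exists u v, dist e u v = diam e.
  case: (boolP [exists u, exists v, dist e u v == diam e]) =>
    [/existsP[u /existsP[v /eqP H]]|H]; first by exists u, v.
  exfalso; have : diam e <= (diam e).-1.
    apply/bigmax_leqP => x _; apply/bigmax_leqP => y _.
    have H1 : dist e x y <= diam e.
      apply: leq_trans (leq_bigmax (F := fun y => dist e x y) y) _.
      exact: (leq_bigmax (F := fun x => \max_y dist e x y) x).
    have H2 : dist e x y != diam e.
      apply/negP => E; apply: (negP H); apply/existsP; exists x.
      by apply/existsP; exists y.
    move: H1 H2; rewrite /diam; lia.
  by move: d2; lia.
set d := diam e in d2 Huv *.
have [hv hn] := dist_spec (ce u v); rewrite Huv in hv hn.
have [p [p1 p2 pin pnB pe]] := geo_path hv hn.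
set A := ball e g u.
set B1 := ball e g.+1 u.
set K := [set x | connect (del_rel e B1) (p g.+2) x].
set S := ~: (A :|: K).
have pA : forall i, i <= g -> p i \in A.
  move=> i Hi; apply: (subsetP (ball_mono u Hi)); apply: pin; lia.
have pK : forall i, g.+2 <= i <= d -> p i \in K.
  move=> i Hi; rewrite inE; apply: interval_conn Hi.
    by move=> j Hj; apply: pe; lia.
  by move=> j Hj; apply: pnB; lia.
have pnB1 : p g.+2 \notin B1 by apply: pnB; lia.
have Knot : forall x, x \in K -> x \notin B1.
  move=> x; rewrite inE => Hx.
  have step : forall y z, y \notin B1 -> del_rel e B1 y z -> z \notin B1 /\ del_rel e B1 y z.
    by move=> y z _ Hyz; split => //; move: (Hyz); rewrite /del_rel /= => /and3P[_ _ ->].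
  by have [] := conn_inv step pnB1 Hx.
have AB1 : forall x, x \in A -> x \in B1 by move=> x; apply: (subsetP (ball_sub g u)).
have notS : forall x, (x \notin S) = (x \in A) || (x \in K).
  by move=> x; rewrite inE negbK inE.
have Acl : forall x y, x \in A -> del_rel e S x y -> (y \in A) /\ del_rel e S x y.
  move=> x y Hx Hxy; split => //; move: (Hxy); rewrite /del_rel /= => /and3P[Exy _].
  rewrite notS => /orP[//|HyK].
  by have := Knot _ HyK; rewrite (ball_step Hx Exy).
have conS := sym_connect_sym (del_sym S se).
have inj : forall a m, a + m <= d.+1 -> injective (fun i : 'I_m => p (a + i)).
  move=> a m Ham i j /= Hij; apply/val_inj/eqP.
  have hi := ltn_ord i; have hj := ltn_ord j.
  case: (ltngtP i j) => h //.
    have H1 := pin (a + i) ltac:(lia).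
    have H2 := pnB (a + i) (a + j) ltac:(lia) ltac:(lia).
    by rewrite -Hij H1 in H2.
  have H1 := pin (a + j) ltac:(lia).
  have H2 := pnB (a + j) (a + i) ltac:(lia) ltac:(lia).
  by rewrite Hij H1 in H2.
set Q1 := [set p (0 + i) | i : 'I_g.+1].
set Q2 := [set p (g.+2 + i) | i : 'I_(d - g.+1)].
have cQ1 : #|Q1| = g.+1 by rewrite card_imset ?card_ord //; apply: inj; lia.
have cQ2 : #|Q2| = d - g.+1 by rewrite card_imset ?card_ord //; apply: inj; lia.
have Q1A : Q1 \subset A.
  by apply/subsetP => x /imsetP[i _ ->]; apply: pA; rewrite add0n; case: i => /=; lia.
have Q2K : Q2 \subset K.
  by apply/subsetP => x /imsetP[i _ ->]; apply: pK; case: i => /=; lia.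
have uA : u \in A by rewrite -p2; apply: pA.
exists S; split.
  rewrite /is_Rg_cutset; apply/andP; split.
    apply/existsP; exists u; apply/existsP; exists (p g.+2).
    rewrite !notS uA pK ?orbT /=; last by lia.
    apply/negP => C.
    have [HA _] := conn_inv (r' := del_rel e S) Acl uA C.
    by rewrite (AB1 _ HA) in pnB1.
  apply/forallP => w; apply/implyP; rewrite notS => /orP[Hw|Hw].
    have Cuw : connect (del_rel e S) u w.
      by apply: ball_conn Hw => y Hy; rewrite notS Hy.
    rewrite -cQ1; apply: subset_leq_card; apply/subsetP => x Hx.
    have xA := subsetP Q1A x Hx.
    rewrite inE notS xA /=.
    case/imsetP: Hx => i _ ->; rewrite add0n.
    rewrite conS in Cuw; apply: connect_trans Cuw _.
    rewrite -p2; apply: (interval_conn (b := g)).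
    - by move=> j Hj; apply: pe; lia.
    - by move=> j Hj; rewrite notS pA //; lia.
    - by case: i => /= i; lia.
  have Cvw : connect (del_rel e S) (p g.+2) w.
    have step : forall x y, x \in K -> del_rel e B1 x y -> y \in K /\ del_rel e S x y.
      move=> x y Hx Hxy; have Hy : y \in K.
        by rewrite inE; move: Hx; rewrite inE => Hx; apply: connect_trans Hx (connect1 Hxy).
      split => //; move: Hxy; rewrite /del_rel /= => /and3P[-> _ _].
      by rewrite !notS Hx Hy !orbT.
    have pK2 : p g.+2 \in K by apply: pK; lia.
    have Hw' := Hw; rewrite inE in Hw'.
    by have [] := conn_inv step pK2 Hw'.
  apply: leq_trans _ (_ : #|Q2| <= _); first by rewrite cQ2; lia.
  apply: subset_leq_card; apply/subsetP => x Hx.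
  have xK := subsetP Q2K x Hx.
  rewrite inE notS xK orbT /=.
  case/imsetP: Hx => i _ ->.
  rewrite conS in Cvw; apply: connect_trans Cvw _.
  apply: interval_conn (_ : g.+2 <= g.+2 + i <= d).
  - by move=> j Hj; apply: pe; lia.
  - by move=> j Hj; rewrite notS pK ?orbT //; lia.
  - by case: i => /= i; lia.
have disj : A :&: K = set0.
  apply/eqP; rewrite -subset0; apply/subsetP => x; rewrite inE => /andP[xA xK].
  by have := Knot _ xK; rewrite AB1.
have cU : #|A :|: K| = #|A| + #|K| by rewrite cardsU disj cards0 subn0.
have hA := subset_leq_card Q1A; have hK := subset_leq_card Q2K.
have cC := cardsC (A :|: K).
rewrite /S; move: cU hA hK cC cQ1 cQ2 d2; lia.
Qed.

End Gen.

Lemma path_simple n : simple_graph (path_rel n).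
Proof.
split; first by move=> x y; rewrite /path_rel orbC.
by move=> x; rewrite /path_rel orbb; apply/negP => /eqP; lia.
Qed.

Lemma path_conn n : connected_graph (path_rel n.+1).
Proof.
have c0 : forall k, k <= n -> connect (path_rel n.+1) ord0 (inord k).
  elim => [|k IH] Hk.
    by rewrite (_ : inord 0 = ord0) //; apply/val_inj; rewrite /= inordK.
  apply: connect_trans (IH (ltnW Hk)) (connect1 _).
  by rewrite /path_rel !inordK ?eqxx //; lia.
have sym := sym_connect_sym (proj1 (path_simple n.+1)).
move=> x y.
have Hx : connect (path_rel n.+1) ord0 x.
  by rewrite -(inord_val x); apply: c0; rewrite -ltnS.
have Hy : connect (path_rel n.+1) ord0 y.
  by rewrite -(inord_val y); apply: c0; rewrite -ltnS.
by rewrite sym in Hx; apply: connect_trans Hx Hy.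
Qed.

Lemma pball n k (x : 'I_n.+1) : x \in ball (path_rel n.+1) k ord0 -> (x : nat) <= k.
Proof.
elim: k x => [|k IH] x; first by rewrite ball0 => /eqP ->.
move/ball_stepP => [/IH H|[z /IH Hz]]; first exact: leqW.
by rewrite /path_rel => /orP[/eqP|/eqP]; lia.
Qed.

Lemma path_diam n : n <= diam (path_rel n.+1).
Proof.
apply: leq_trans (_ : dist (path_rel n.+1) ord0 ord_max <= _).
  rewrite /dist; set a := fun k => _.
  case: (leqP n (find a (iota 0 #|'I_n.+1|))) => // H.
  have Hh : has a (iota 0 #|'I_n.+1|) by rewrite has_find; apply: (ltn_trans H); rewrite size_iota card_ord.
  have := nth_find 0 Hh; rewrite nth_iota; last by move: (Hh); rewrite has_find size_iota.
  by move/pball => /=; lia.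
apply: leq_trans (leq_bigmax (F := fun y => dist (path_rel n.+1) ord0 y) ord_max) _.
exact: (leq_bigmax (F := fun x => \max_y dist (path_rel n.+1) x y) ord0).
Qed.

Lemma bigmin_le (I : finType) (P : pred I) (F : I -> nat) x j :
  P j -> \big[minn/x]_(i | P i) F i <= F j.
Proof.
move=> Pj; rewrite -big_filter.
have : j \in [seq i <- index_enum I | P i] by rewrite mem_filter Pj mem_index_enum.
elim: [seq i <- index_enum I | P i] => [//|a s IH].
rewrite inE big_cons => /orP[/eqP <-|/IH H]; first exact: geq_minl.
exact: leq_trans (geq_minr _ _) H.
Qed.

Theorem proposition3p2 :
  (forall (T : finType) (e : rel T) (g : nat),
     simple_graph e -> connected_graph e ->
     g.+1 <= (diam e)./2 ->
     has_Rg_cutset e g /\ kappa e g <= #|T| - diam e)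
  /\
  (forall (n g : nat),
     g.+1 <= (diam (path_rel n))./2 ->
     has_Rg_cutset (path_rel n) g /\
     kappa (path_rel n) g = n - diam (path_rel n)).
Proof.
have P1 : forall (T : finType) (e : rel T) (g : nat),
     simple_graph e -> connected_graph e ->
     g.+1 <= (diam e)./2 ->
     has_Rg_cutset e g /\ kappa e g <= #|T| - diam e.
  move=> T e g sg cg hg; have [S [HS Hc]] := main1 sg cg hg.
  split; first by exists S.
  exact: leq_trans (bigmin_le _ _ HS) Hc.
split => //.
case=> [|n] g hg.
  have E : diam (path_rel 0) = 0 by rewrite /diam big1 // => -[].
  by rewrite E in hg.
have [H1 H2] := P1 _ _ g (@path_simple n.+1) (@path_conn n) hg.
split => //.
have Hd := path_diam n.
have H3 : 0 < kappa (path_rel n.+1) g.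
  rewrite /kappa; apply: (big_ind (fun x => 0 < x)).
  - by rewrite card_ord.
  - by move=> x y hx hy; rewrite leq_min hx hy.
  move=> S HS; rewrite card_gt0; apply/negP => /eqP E.
  move: HS; rewrite /is_Rg_cutset /is_cutset E.
  move=> /andP[/existsP[x /existsP[y /and3P[_ _ Hnc]]] _]; apply: (negP Hnc).
  have step : forall a b, predT a -> path_rel n.+1 a b ->
      predT b /\ del_rel (path_rel n.+1) set0 a b.
    by move=> a b _ hab; split => //; rewrite /del_rel /= !inE hab.
  by have [] := conn_inv step (isT : predT x) (@path_conn n x y).
move: H2 H3 Hd; rewrite card_ord; lia.
Qed.
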